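(* Let $\mathbb{K}$ be any field and let $p_1,\ldots,p_m\in\mathbb{K}[x]$ be tame polynomials. Let $k_1,\ldots,k_m,k$ be the orders of the groups $\Gamma_\mathbb{K}(p_1),\ldots,\Gamma_\mathbb{K}(p_m),\Gamma_\mathbb{K}(p_1\circ\cdots\circ p_m)$. Then $k$ divides $k_1k_2\cdots k_m$.
   Context: A polynomial $f\in\mathbb{K}[x]$ is called tame if $\mathrm{char}\,\mathbb{K}$ does not divide $\deg f$ (in particular a tame polynomial is non-constant). Composition is $g\circ h=g(h(x))$. For a non-constant rational function $f\in\mathbb{K}(x)$, its fixing group is $\Gamma_\mathbb{K}(f)=\{u=\frac{ax+b}{cx+d}: a,b,c,d\in\mathbb{K},\ ad-bc\neq 0,\ f\circ u=f\}$, a group under composition; it is finite, its order dividing $\deg f$. *)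

(* Defs.v *)
From HB Require Import structures.
From mathcomp Require Import all_boot all_order all_algebra.
Set Implicit Arguments. Unset Strict Implicit. Unset Printing Implicit Defensive.
Import GRing.Theory.
Local Open Scope ring_scope.

Notation ratf K := {fraction {poly K}}.
Notation polyF p := (@FracField.tofrac _ p).

(* deg f = (size f).-1 ; tame: char K does not divide deg f.
   char 0: no prime in [pchar K], and "0 divides n" means n = 0. *)
Definition tame (K : fieldType) (f : {poly K}) : Prop :=
  ((size f).-1 != 0)%N /\ forall q : nat, q \in [pchar K] -> ~~ (q %| (size f).-1)%N.

Definition mobius (K : fieldType) (u : ratf K) : Prop :=
  exists a b c d : K, a * d - b * c != 0 /\
    u = polyF (a *: 'X + b%:P) / polyF (c *: 'X + d%:P).

Definition rcomp (K : fieldType) (f : {poly K}) (u : ratf K) : ratf K :=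
  (map_poly (fun c : {poly K} => polyF c) (map_poly polyC f)).[u].

Definition in_fixing_group (K : fieldType) (f : {poly K}) (u : ratf K) : Prop :=
  mobius u /\ rcomp f u = polyF f.

Definition fixing_group_order (K : fieldType) (f : {poly K}) (k : nat) : Prop :=
  exists s : seq (ratf K), [/\ uniq s, (forall u, u \in s <-> in_fixing_group f u) & size s = k].

Definition compose_list (K : fieldType) (ps : seq {poly K}) : {poly K} :=
  foldr (fun p acc => p \Po acc) 'X ps.

(* Main.v *)
Require Import Defs.
From mathcomp Require Import all_boot all_order all_algebra.
From mathcomp Require Import ring zify.
Import GRing.Theory.
Local Open Scope ring_scope.

Lemma lin_size {K : fieldType} (a b : K) : a != 0 -> size (a *: 'X + b%:P) = 2%N.
Proof.
move=> a0; rewrite size_polyDl ?size_scale ?size_polyX //.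
by rewrite (leq_ltn_trans (size_polyC_leq1 b)) // size_scale ?size_polyX.
Qed.

Lemma lin_lead {K : fieldType} (a b : K) : a != 0 -> lead_coef (a *: 'X + b%:P) = a.
Proof.
move=> a0; rewrite lead_coefDl ?lead_coefZ ?lead_coefX ?mulr1 //.
by rewrite (leq_ltn_trans (size_polyC_leq1 b)) // size_scale ?size_polyX.
Qed.

Lemma comp_lin_size {K : fieldType} (p : {poly K}) a b : a != 0 ->
  size (p \Po (a *: 'X + b%:P)) = size p.
Proof. by move=> a0; rewrite size_comp_poly2 // lin_size. Qed.

Lemma comp_lin_lead {K : fieldType} (p : {poly K}) a b : a != 0 ->
  lead_coef (p \Po (a *: 'X + b%:P)) = lead_coef p * a ^+ (size p).-1.
Proof. by move=> a0; rewrite lead_coef_comp ?lin_size ?lin_lead. Qed.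

Lemma tame_natr {K : fieldType} {f : {poly K}} : tame f -> ((size f).-1)%:R != 0 :> K.
Proof.
case=> nz hc; apply/negP => h0.
have [|q hq] := natf0_pchar (_ : 0 < _)%N h0; first by rewrite lt0n.
by move: (hc q hq); rewrite (dvdn_pcharf hq) h0.
Qed.

Lemma size_sub_lt {K : fieldType} (p q : {poly K}) : p != 0 -> size p = size q ->
  lead_coef p = lead_coef q -> (size (p - q)%R < size p)%N.
Proof.
move=> p0 sz ld; have le : (size (p - q)%R <= size p)%N.
  by rewrite (leq_trans (size_polyD _ _)) // size_polyN sz maxnn.
rewrite ltn_neqAle le andbT; apply/negP => /eqP E.
have : lead_coef (p - q) = 0.
  by rewrite lead_coefE E coefB -{1}lead_coefE sz -lead_coefE ld subrr.
move/eqP; rewrite lead_coef_eq0 => /eqP E0.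
by move: E; rewrite E0 size_poly0 => /esym/eqP; rewrite size_poly_eq0 (negbTE p0).
Qed.

Lemma sumXX_size {K : fieldType} (g1 g2 : {poly K}) (n : nat) :
  g1 != 0 -> size g1 = size g2 -> lead_coef g1 = lead_coef g2 -> n%:R != 0 :> K ->
  size (\sum_(i < n) g1 ^+ (n.-1 - i) * g2 ^+ i) = ((size g1).-1 * n.-1).+1.
Proof.
move=> g10 sz ld nn.
set d := ((size g1).-1 * n.-1)%N.
have g20 : g2 != 0 by rewrite -size_poly_eq0 -sz size_poly_eq0.
have hT : forall i : 'I_n, size (g1 ^+ (n.-1 - i) * g2 ^+ i) = d.+1 /\
    lead_coef (g1 ^+ (n.-1 - i) * g2 ^+ i) = lead_coef g1 ^+ n.-1.
  move=> i; have ilt : (i <= n.-1)%N by rewrite -ltnS prednK ?ltn_ord // (leq_ltn_trans _ (ltn_ord i)).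
  split; last by rewrite lead_coefM !lead_coef_exp -ld -exprD subnK.
  rewrite size_mul ?expf_neq0 // (polySpred (expf_neq0 _ g10)) (polySpred (expf_neq0 _ g20)).
  by rewrite addSn addnS /= !size_exp -sz -mulnDr subnK.
have cd : (\sum_(i < n) g1 ^+ (n.-1 - i) * g2 ^+ i)`_d = lead_coef g1 ^+ n.-1 *+ n.
  rewrite coef_sum (eq_bigr (fun _ => lead_coef g1 ^+ n.-1)).
    by rewrite sumr_const card_ord.
  by move=> i _; have [s l] := hT i; rewrite -l lead_coefE s.
have cd0 : (\sum_(i < n) g1 ^+ (n.-1 - i) * g2 ^+ i)`_d != 0.
  by rewrite cd -mulr_natr mulf_neq0 // expf_neq0 // lead_coef_eq0.
apply/eqP; rewrite eqn_leq; apply/andP; split.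
  apply/leq_sizeP => j dj; rewrite coef_sum big1 // => i _.
  by rewrite nth_default // (proj1 (hT i)).
by rewrite ltnNge; apply/negP => /(nth_default 0) h; move: cd0; rewrite h eqxx.
Qed.

Lemma tame_size {K : fieldType} {p : {poly K}} : tame p -> size p = ((size p).-1).+1 /\ (1 < size p)%N.
Proof.
case=> nz _; have h : (0 < size p)%N by case: (size p) nz.
by rewrite prednK //; split => //; case: (size p) nz => [|[|]].
Qed.

Lemma shift_fix {K : fieldType} (p : {poly K}) (c : K) :
  tame p -> p \Po ('X + c%:P) = p -> c = 0.
Proof.
move=> tp E; have tn := tame_natr tp; have [szp sp1] := tame_size tp.
move: tn szp sp1; set n := (size p).-1 => tn szp sp1.
have pn0 : p != 0 by rewrite -size_poly_eq0; case: (size p) sp1.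
have n0 : (0 < n)%N by rewrite -ltnS -szp.
set l := lead_coef p; set p0 := p - l *: 'X^n.
have l0 : l != 0 by rewrite lead_coef_eq0.
have sp0 : (size p0 < size p)%N.
  apply: size_sub_lt => //; first by rewrite size_scale // size_polyXn.
  by rewrite lead_coefZ lead_coefXn mulr1.
have decomp : p = l *: 'X^n + p0 by rewrite /p0 addrC subrK.
set g := 'X + c%:P.
set S := \sum_(i < n) g ^+ (n.-1 - i) * 'X ^+ i.
have key : p \Po g - p = l *: ((g - 'X) * S) + (p0 \Po g - p0).
  rewrite [in LHS]decomp comp_polyD comp_polyZ comp_Xn_poly -subrXX.
  by rewrite opprD addrACA scalerBr.
have gX : g - 'X = c%:P by rewrite /g addrC addKr.
case: (eqVneq c 0) => // c0; exfalso.
have sS : size S = n.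
  rewrite /S sumXX_size ?size_XaddC ?size_polyX ?lead_coefXaddC ?lead_coefX //.
    by rewrite mul1n prednK.
  by rewrite -size_poly_eq0 size_XaddC.
have s1 : size (l *: ((g - 'X) * S)) = n by rewrite size_scale // gX size_Cmul.
have s2 : (size (p0 \Po g - p0)%R < n)%N.
  case: (eqVneq p0 0) => [->|p00]; first by rewrite comp_poly0 subrr size_poly0.
  have := @size_sub_lt _ (p0 \Po g) p0.
  rewrite size_comp_poly2 ?size_XaddC // lead_coef_comp ?size_XaddC //.
  rewrite lead_coefXaddC expr1n mulr1 -size_poly_eq0 size_comp_poly2 ?size_XaddC //.
  rewrite size_poly_eq0 => /(_ p00 erefl erefl) h.
  by rewrite (leq_trans h) // -ltnS -szp.
have : size (p \Po g - p) = n by rewrite key size_polyDl s1.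
by rewrite E subrr size_poly0 => nE; move: n0; rewrite -nE.
Qed.

Lemma comp_eq0 {K : fieldType} (h Q : {poly K}) : (1 < size Q)%N -> h \Po Q = 0 -> h = 0.
Proof.
move=> sQ E; case: (leqP (size h) 1) => sh.
  by rewrite (size1_polyC sh) in E *; rewrite comp_polyC in E.
have := size_comp_poly h Q; rewrite E size_poly0 /= => /esym/eqP.
by rewrite muln_eq0; case/orP => /eqP; [move: sh|move: sQ]; case: (size _) => [|[|]].
Qed.

Lemma approx_root {K : fieldType} {p Q r : {poly K}} {al : K} : tame p -> (1 < size Q)%N ->
  size r = size Q -> lead_coef r = al * lead_coef Q -> al ^+ (size p).-1 = 1 ->
  p \Po r = p \Po Q -> exists be, r = al *: Q + be%:P.
Proof.
move=> tp sQ sr lr aln E; have tn := tame_natr tp; have [szp sp1] := tame_size tp.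
move: tn szp sp1 aln; set n := (size p).-1 => tn szp sp1 aln.
have pn0 : p != 0 by rewrite -size_poly_eq0; case: (size p) sp1.
have n0 : (0 < n)%N by rewrite -ltnS -szp.
have al0 : al != 0 by apply/eqP => a0; move: aln; rewrite a0 expr0n eqn0Ngt n0 /= => /eqP; rewrite eq_sym oner_eq0.
have Q0 : Q != 0 by rewrite -size_poly_eq0; case: (size Q) sQ.
set l := lead_coef p; set p0 := p - l *: 'X^n.
have l0 : l != 0 by rewrite lead_coef_eq0.
have sp0 : (size p0 < size p)%N.
  apply: size_sub_lt => //; first by rewrite size_scale // size_polyXn.
  by rewrite lead_coefZ lead_coefXn mulr1.
have decomp : p = l *: 'X^n + p0 by rewrite /p0 addrC subrK.
clearbody p0.
set g1 := al *: Q.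
have key : l *: (g1 ^+ n - r ^+ n) = (p0 \Po r) - (p0 \Po Q).
  move: E; rewrite decomp !comp_polyD !comp_polyZ !comp_Xn_poly => E.
  rewrite /g1 exprZn aln scale1r scalerBr -[l *: Q ^+ n](addrK (p0 \Po Q)) -E.
  by rewrite addrAC (addrC (l *: r ^+ n)) addrK.
set m := (size Q).-1.
have sR : (size ((p0 \Po r) - (p0 \Po Q))%R <= (n.-1 * m).+1)%N.
  rewrite (leq_trans (size_polyD _ _)) // size_polyN geq_max.
  have hp0 : ((size p0).-1 <= n.-1)%N by rewrite -!subn1 leq_sub2r // -ltnS -szp.
  by rewrite !(leq_trans (size_comp_poly_leq _ _)) // ltnS ?sr leq_mul2r hp0 orbT.
case: (eqVneq (g1 - r) 0) => [d0|d0].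
  by exists 0; rewrite addr0; apply/eqP; rewrite eq_sym -subr_eq0 d0.
have g10 : g1 != 0 by rewrite scaler_eq0 negb_or al0.
have sS := sumXX_size g1 r n g10.
rewrite /g1 size_scale // -sr lead_coefZ lr in sS.
have sS' := sS erefl erefl tn.
move: key; rewrite subrXX => key.
have : size (l *: ((g1 - r) * \sum_(i < n) g1 ^+ (n.-1 - i) * r ^+ i)) = ((size (g1 - r)%R) + m * n.-1)%N.
  rewrite size_scale // size_mul //; last by rewrite -size_poly_eq0 sS'.
  by rewrite sS' /m sr addnS.
rewrite key => hs; move: sR; rewrite hs => sR. have s1 : (size (g1 - r)%R <= 1)%N. move: sR; rewrite mulnC; lia.
exists (- (g1 - r)`_0); rewrite polyCN -(size1_polyC s1).
by rewrite opprB addrC subrK.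
Qed.

Lemma fix_decomp {K : fieldType} (p Q : {poly K}) (a b : K) : tame p -> (1 < size Q)%N -> a != 0 ->
  (p \Po Q) \Po (a *: 'X + b%:P) = p \Po Q ->
  exists be, p \Po (a ^+ (size Q).-1 *: 'X + be%:P) = p /\
             Q \Po (a *: 'X + b%:P) = a ^+ (size Q).-1 *: Q + be%:P.
Proof.
move=> tp sQ a0 E; have [szp sp1] := tame_size tp.
set r := Q \Po (a *: 'X + b%:P); set m := (size Q).-1.
have pr : p \Po r = p \Po Q by rewrite /r comp_polyA E.
have sr : size r = size Q by rewrite comp_lin_size.
have lr : lead_coef r = a ^+ m * lead_coef Q by rewrite comp_lin_lead // mulrC.
have szP := size_comp_poly p Q.
have P0 : p \Po Q != 0.
  apply/eqP => P0; move: szP; rewrite P0 size_poly0 /= => /esym/eqP.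
  by rewrite muln_eq0; case/orP => /eqP; [move: sp1|move: sQ]; case: (size _) => [|[|]].
have aln : (a ^+ m) ^+ (size p).-1 = 1.
  have := comp_lin_lead (p \Po Q) a b a0; rewrite E szP -exprM mulnC => h.
  apply/eqP; rewrite eq_sym; apply/eqP; apply: (mulfI (_ : lead_coef (p \Po Q) != 0)).
    by rewrite lead_coef_eq0.
  by rewrite mulr1 {1}h.
have [be hr] := approx_root tp sQ sr lr aln pr.
exists be; split => //.
apply/eqP; rewrite -subr_eq0; apply/eqP; apply: (comp_eq0 _ _ sQ).
rewrite comp_polyB -comp_polyA comp_polyD comp_polyZ comp_polyX comp_polyC -hr pr.
by rewrite subrr.
Qed.
Lemma rcomp_poly {K : fieldType} (f g : {poly K}) : rcomp f (polyF g) = polyF (f \Po g).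
Proof. by rewrite /rcomp horner_map. Qed.

Lemma rcomp_frac {K : fieldType} (f A B : {poly K}) : B != 0 ->
  rcomp f (polyF A / polyF B) * polyF B ^+ (size f).-1 =
  polyF (\sum_(i < size f) f`_i *: (A ^+ i * B ^+ ((size f).-1 - i))).
Proof.
move=> B0; have B'0 : polyF B != 0 by rewrite tofrac_eq0.
rewrite /rcomp horner_coef size_map_inj_poly; first last.
- exact: rmorph0.
- by move=> x y /eqP; rewrite tofrac_eq => /eqP.
rewrite size_map_polyC.
rewrite mulr_suml rmorph_sum; apply: eq_bigr => i _.
have ilt : (i <= (size f).-1)%N by rewrite -ltnS (leq_trans (ltn_ord i)) // leqSpred.
rewrite coef_map /= coef_map /= -mul_polyC !rmorphM /= !rmorphXn /= expr_div_n.
rewrite -mulrA; congr (_ * _); rewrite -{1}(subnKC ilt) exprD mulrA.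
by rewrite (mulfVK (expf_neq0 i B'0)).
Qed.

Lemma tame_size' {K : fieldType} {p : {poly K}} : tame p -> size p = ((size p).-1).+1 /\ (1 < size p)%N.
Proof.
case=> nz _; have h : (0 < size p)%N by case: (size p) nz.
by rewrite prednK //; split => //; case: (size p) nz => [|[|]].
Qed.

Lemma mobius_fix {K : fieldType} (f : {poly K}) u : tame f -> in_fixing_group f u ->
  exists a b, [/\ a != 0, u = polyF (a *: 'X + b%:P) & f \Po (a *: 'X + b%:P) = f].
Proof.
move=> tf [[a [b [c [d [det ->]]]]] E].
have [szf sf1] := tame_size' tf.
set A := a *: 'X + b%:P; set B := c *: 'X + d%:P.
have cB : B`_1 = c by rewrite /B coefD coefZ coefX coefC /= mulr1 addr0.
have dB : B`_0 = d by rewrite /B coefD coefZ coefX coefC /= mulr0 add0r.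
have B0 : B != 0.
  by apply/eqP => B0; move: det; rewrite -cB -dB B0 !coef0 !mulr0 subrr eqxx.
have key := rcomp_frac f A B B0.
rewrite E -rmorphXn -rmorphM in key; move/eqP: key; rewrite tofrac_eq => /eqP key.
case: (eqVneq c 0) => c0.
  move: det; rewrite c0 mulr0 subr0 mulf_eq0 negb_or => /andP [a0 d0].
  exists (a / d), (b / d).
  have Bd : B = d%:P by rewrite /B c0 scale0r add0r.
  have AA : A = d%:P * ((a / d) *: 'X + (b / d)%:P).
    rewrite mulrDr mul_polyC scalerA -polyCM /A.
    by rewrite [d * (a / d)]mulrC [d * (b / d)]mulrC !divfK.
  have hu : polyF A / polyF B = polyF ((a / d) *: 'X + (b / d)%:P).
    rewrite AA Bd rmorphM /= mulrC mulKf //.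
    by rewrite tofrac_eq0 polyC_eq0.
  split => //; first by rewrite mulf_neq0 ?invr_eq0.
  by move: E; rewrite hu rcomp_poly => /eqP; rewrite tofrac_eq => /eqP.
exfalso; set n := (size f).-1 in key szf.
have n0 : (0 < n)%N by rewrite -ltnS -szf.
set x0 := - d / c.
have hB : B.[x0] = 0.
  rewrite /B /x0 hornerD hornerZ hornerX hornerC; field; exact c0.
have hA : A.[x0] != 0.
  have : A.[x0] * c = - (a * d - b * c).
    rewrite /A /x0 hornerD hornerZ hornerX hornerC; field; exact c0.
  move=> h; apply/eqP => h0; move: h; rewrite h0 mul0r => /esym/eqP; by rewrite oppr_eq0 (negbTE det).
have := congr1 (fun p => p.[x0]) key.
rewrite /= hornerM horner_exp hB expr0n eqn0Ngt n0 /= mulr0 horner_sum.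
have jlt : (n < size f)%N by rewrite szf.
rewrite (bigD1 (Ordinal jlt)) //= big1 ?addr0; last first.
  move=> i /eqP ne; rewrite hornerZ hornerM !horner_exp hB expr0n.
  have : (i < n)%N.
    by rewrite ltn_neqAle -ltnS -szf ltn_ord andbT; apply/eqP => h; apply: ne; apply: val_inj.
  by rewrite -subn_gt0 => /lt0n_neq0 /negbTE ->; rewrite !mulr0.
rewrite hornerZ hornerM !horner_exp subnn expr0 mulr1 => /esym/eqP.
rewrite mulf_eq0 expf_eq0 (negbTE hA) andbF orbF.
have : lead_coef f != 0 by rewrite lead_coef_eq0 -size_poly_eq0 szf.
by rewrite lead_coefE -/n => /negbTE ->.
Qed.

Lemma fix_mobius {K : fieldType} (f : {poly K}) a b : a != 0 ->
  f \Po (a *: 'X + b%:P) = f -> in_fixing_group f (polyF (a *: 'X + b%:P)).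
Proof.
move=> a0 E; split; last by rewrite rcomp_poly E.
exists a, b, 0, 1; split; first by rewrite mulr1 mulr0 subr0.
by rewrite scale0r add0r rmorph1 divr1.
Qed.
Lemma transfer (T U : eqType) (R : T -> U -> Prop) (s : seq T) :
  uniq s -> (forall x, x \in s -> exists y, R x y) ->
  (forall x y1 y2, R x y1 -> R x y2 -> y1 = y2) ->
  (forall x1 x2 y, x1 \in s -> x2 \in s -> R x1 y -> R x2 y -> x1 = x2) ->
  exists l, [/\ uniq l, size l = size s & forall y, y \in l <-> exists2 x, x \in s & R x y].
Proof.
elim: s => [|x s IH] /=.
  by move=> _ _ _; exists [::]; split => // y; split => // [[]].
case/andP=> xs us ex fn inj.
have [l [ul sl hl]] : exists l, [/\ uniq l, size l = size s & forall y, y \in l <-> exists2 x, x \in s & R x y].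
  apply: IH => //.
    by move=> z zs; apply: ex; rewrite inE zs orbT.
  by move=> x1 x2 y h1 h2; apply: inj; rewrite inE ?h1 ?h2 orbT.
have [y Rxy] := ex x (mem_head _ _).
exists (y :: l); split => /=.
- rewrite ul andbT; apply/negP => /hl [x' x's Rx'y].
  have := inj x x' y (mem_head _ _); rewrite inE x's orbT => /(_ erefl Rxy Rx'y) E.
  by move: xs; rewrite E x's.
- by rewrite sl.
- move=> y'; rewrite inE; split.
    case/orP => [/eqP ->|/hl [x' x's Rx']]; first by exists x => //; rewrite mem_head.
    by exists x' => //; rewrite inE x's orbT.
  case=> x'; rewrite inE => /orP [/eqP ->|x's] R'.
    by rewrite (fn _ _ _ R' Rxy) eqxx.
  by apply/orP; right; apply/hl; exists x'.
Qed.

Lemma prod_mulseq {K : fieldType} (a : K) (l : seq K) :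
  \prod_(x <- l) (a * x) = a ^+ size l * \prod_(x <- l) x.
Proof.
elim: l => [|x l IH]; first by rewrite !big_nil mulr1.
by rewrite !big_cons IH exprS /=; ring.
Qed.

Lemma lagrange_lite {K : fieldType} (l : seq K) : uniq l -> 0 \notin l ->
  (forall x y, x \in l -> y \in l -> x * y \in l) -> forall a, a \in l -> a ^+ size l = 1.
Proof.
move=> ul l0 cl a al.
have a0 : a != 0 by apply: contraNneq l0 => <-.
have um : uniq (map ( *%R a) l) by rewrite map_inj_uniq //; exact: mulfI.
have sub : {subset map ( *%R a) l <= l} by move=> y /mapP [x xl ->]; exact: cl.
have [|_ eqm] := uniq_min_size um sub (_ : (size l <= size (map ( *%R a) l))%N); first by rewrite size_map.
have pe : perm_eq (map ( *%R a) l) l by apply: uniq_perm.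
have := perm_big (x := 1) (op := *%R) (P := predT) (F := id) _ pe.
rewrite big_map prod_mulseq => E.
have P0 : \prod_(x <- l) x != 0.
  by rewrite prodf_seq_neq0; apply/allP => x xl /=; apply: contraNneq l0 => <-.
by apply: (mulIf P0); rewrite mul1r.
Qed.
Definition Gf {K : fieldType} (f : {poly K}) (a : K) : Prop :=
  a != 0 /\ exists b, f \Po (a *: 'X + b%:P) = f.

Lemma lin_comp {K : fieldType} (a b c d : K) :
  (a *: 'X + b%:P) \Po (c *: 'X + d%:P) = (a * c) *: 'X + (a * d + b)%:P.
Proof.
rewrite comp_polyD comp_polyZ comp_polyX comp_polyC scalerDr scalerA -addrA.
by rewrite polyCD polyCM mul_polyC.
Qed.

Lemma G_mul {K : fieldType} (f : {poly K}) a1 a2 : Gf f a1 -> Gf f a2 -> Gf f (a1 * a2).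
Proof.
move=> [a10 [b1 E1]] [a20 [b2 E2]]; split; first by rewrite mulf_neq0.
by exists (a1 * b2 + b1); rewrite -lin_comp comp_polyA E1 E2.
Qed.

Lemma G_1 {K : fieldType} (f : {poly K}) : Gf f 1.
Proof. by split; [exact: oner_neq0|exists 0; rewrite scale1r addr0 comp_polyXr]. Qed.

Lemma G_pow {K : fieldType} (f : {poly K}) a n : Gf f a -> Gf f (a ^+ n).
Proof.
move=> Ga; elim: n => [|n IH]; first by rewrite expr0; exact: G_1.
by rewrite exprS; apply: G_mul.
Qed.

Lemma lin_inj {K : fieldType} (f : {poly K}) a b1 b2 : tame f -> a != 0 ->
  f \Po (a *: 'X + b1%:P) = f -> f \Po (a *: 'X + b2%:P) = f -> b1 = b2.
Proof.
move=> tf a0 E1 E2.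
set w := a^-1 *: 'X + (- (b1 / a))%:P.
have h : forall b, (a *: 'X + b%:P) \Po w = 'X + (b - b1)%:P.
  move=> b; rewrite lin_comp mulfV // scale1r; congr (_ + _%:P).
  by field.
have : f \Po ('X + (b2 - b1)%:P) = f.
  by rewrite -h comp_polyA E2 -E1 -comp_polyA h subrr addr0 comp_polyXr.
by move/(shift_fix _ _ tf)/eqP; rewrite subr_eq0 => /eqP.
Qed.

Lemma polyF_lin_inj {K : fieldType} (a b a' b' : K) :
  polyF (a *: 'X + b%:P) = polyF (a' *: 'X + b'%:P) -> a = a' /\ b = b'.
Proof.
move/eqP; rewrite tofrac_eq => /eqP E.
have c1 : forall (x y : K), (x *: 'X + y%:P)`_1 = x.
  by move=> x y; rewrite coefD coefZ coefX coefC /= mulr1 addr0.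
have c0 : forall (x y : K), (x *: 'X + y%:P)`_0 = y.
  by move=> x y; rewrite coefD coefZ coefX coefC /= mulr0 add0r.
by split; [rewrite -(c1 a b) E c1 | rewrite -(c0 a b) E c0].
Qed.

Lemma G_list {K : fieldType} (f : {poly K}) k : tame f -> fixing_group_order f k ->
  exists l : seq K, [/\ uniq l, size l = k & forall a, a \in l <-> Gf f a].
Proof.
move=> tf [s [us hs <-]].
pose R := fun (u : {fraction {poly K}}) (a : K) => a != 0 /\ exists b, u = polyF (a *: 'X + b%:P).
have H1 : forall u, u \in s -> exists y, R u y.
  move=> u /hs /(mobius_fix _ _ tf) [a [b [a0 -> _]]]; exists a; split => //; by exists b.
have H2 : forall u y1 y2, R u y1 -> R u y2 -> y1 = y2.
  by move=> u y1 y2 [_ [b1 ->]] [_ [b2]] /polyF_lin_inj [].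
have H3 : forall u1 u2 y, u1 \in s -> u2 \in s -> R u1 y -> R u2 y -> u1 = u2.
  move=> u1 u2 y /hs [_ F1] /hs [_ F2] [y0 [b1 E1]] [_ [b2 E2]].
  rewrite E1 rcomp_poly in F1; rewrite E2 rcomp_poly in F2.
  move/eqP: F1; rewrite tofrac_eq => /eqP F1; move/eqP: F2; rewrite tofrac_eq => /eqP F2.
  by rewrite E1 E2 (lin_inj _ _ _ _ tf y0 F1 F2).
have [l [ul sl hl]] := transfer _ _ _ _ us H1 H2 H3.
exists l; split => // a; rewrite hl; split.
  case=> u /hs [_ F] [a0 [b E]]; split => //; exists b.
  by move: F; rewrite E rcomp_poly => /eqP; rewrite tofrac_eq => /eqP.
case=> a0 [b E]; exists (polyF (a *: 'X + b%:P)); first by apply/hs; exact: fix_mobius.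
by split => //; exists b.
Qed.

Lemma G_pow_order {K : fieldType} (f : {poly K}) k : tame f -> fixing_group_order f k ->
  forall a, Gf f a -> a ^+ k = 1.
Proof.
move=> tf fo a Ga; have [l [ul <- hl]] := G_list _ _ tf fo.
apply: lagrange_lite => //; last by apply/hl.
  by apply/negP => /hl [/eqP].
by move=> x y /hl Gx /hl Gy; apply/hl; apply: G_mul.
Qed.
Lemma tame_comp {K : fieldType} (p q : {poly K}) : tame p -> tame q -> tame (p \Po q).
Proof.
move=> [np hp] [nq hq]; rewrite /tame size_comp_poly; split.
  by rewrite muln_eq0 negb_or np nq.
move=> r hr; rewrite Euclid_dvdM ?(pcharf_prime hr) // negb_or.
by rewrite (hp r hr) (hq r hr).
Qed.

Lemma tame_X {K : fieldType} : tame ('X : {poly K}).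
Proof.
rewrite /tame size_polyX; split => // r hr.
by rewrite Euclid_dvd1 // (pcharf_prime hr).
Qed.

Lemma tame_compose {K : fieldType} (ps : seq {poly K}) :
  (forall i, (i < size ps)%N -> tame (nth 0 ps i)) -> tame (compose_list ps).
Proof.
elim: ps => [|p ps IH] h /=; first exact: tame_X.
apply: tame_comp; first exact: (h 0%N).
by apply: IH => i hi; apply: (h i.+1).
Qed.

Lemma claim {K : fieldType} (ps : seq {poly K}) (ks : seq nat) :
  (forall i, (i < size ps)%N -> tame (nth 0 ps i)) ->
  size ks = size ps ->
  (forall i, (i < size ps)%N -> fixing_group_order (nth 0 ps i) (nth 0%N ks i)) ->
  forall a, Gf (compose_list ps) a -> a ^+ (\prod_(j <- ks) j) = 1.
Proof.
elim: ps ks => [|p ps IH] [|k1 ks] //= ht hs hf.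
  move=> a [a0 [b E]]; rewrite big_nil expr1.
  have := congr1 (fun q : {poly K} => q`_1) E; rewrite /= comp_polyX.
  by rewrite coefD coefZ !coefX coefC /= mulr1 addr0.
case: hs => hs.
have tp : tame p := ht 0%N erefl.
have ht' : forall i, (i < size ps)%N -> tame (nth 0 ps i) by move=> i hi; apply: (ht i.+1).
have hf' : forall i, (i < size ps)%N -> fixing_group_order (nth 0 ps i) (nth 0%N ks i).
  by move=> i hi; apply: (hf i.+1).
have fo : fixing_group_order p k1 := hf 0%N erefl.
set Q := compose_list ps.
have tQ : tame Q := tame_compose _ ht'.
have [_ sQ] := tame_size tQ.
move=> a Ga; rewrite big_cons exprM.
have [a0 [b E]] := Ga.
have [be [hp _]] := fix_decomp _ _ _ _ tp sQ a0 E.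
have Gam : Gf p (a ^+ (size Q).-1) by split; [rewrite expf_neq0 | exists be].
have am1 := G_pow_order _ _ tp fo _ Gam.
have [c0 [b' E']] := G_pow _ _ k1 Ga.
have [be' [hp' hQ']] := fix_decomp _ _ _ _ tp sQ c0 E'.
have c1 : (a ^+ k1) ^+ (size Q).-1 = 1 by rewrite exprAC am1.
rewrite c1 scale1r in hp' hQ'.
have be0 := shift_fix _ _ tp hp'; rewrite be0 addr0 in hQ'.
by apply: (IH ks ht' hs hf'); split => //; exists b'; rewrite hQ' scale1r.
Qed.
Theorem mainTheorem2 (K : fieldType) (ps : seq {poly K}) (ks : seq nat) (k : nat) :
  (forall i, (i < size ps)%N -> tame (nth 0 ps i)) ->
  size ks = size ps ->
  (forall i, (i < size ps)%N -> fixing_group_order (nth 0 ps i) (nth 0%N ks i)) ->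
  fixing_group_order (compose_list ps) k ->
  (k %| \prod_(j <- ks) j)%N.
Proof.
move=> ht hs hf fo.
have tP := tame_compose _ ht.
have [l [ul sl hl]] := G_list _ _ tP fo.
set N := (\prod_(j <- ks) j)%N.
have hN : forall a, a \in l -> a ^+ N = 1.
  by move=> a /hl; apply: (claim _ _ ht hs hf).
have hk : forall a, a \in l -> a ^+ k = 1.
  by move=> a /hl; apply: (G_pow_order _ _ tP fo).
have k0 : (0 < k)%N.
  have h1 : (1 : K) \in l by apply/hl; exact: G_1.
  by move: h1; rewrite -sl; case: (l).
have hr : forall a, a \in l -> a ^+ (N %% k) = 1.
  move=> a al; have := hN a al.
  by rewrite {1}(divn_eq N k) GRing.exprD mulnC GRing.exprM hk // GRing.expr1n GRing.mul1r.
rewrite /dvdn; apply/negPn/negP => r0.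
have r0' : (0 < N %% k)%N by rewrite lt0n.
have pn0 : ('X^(N %% k) - 1 : {poly K}) != 0.
  by rewrite -size_poly_eq0 size_XnsubC.
have ar : all (root ('X^(N %% k) - 1)) l.
  apply/allP => x xl; rewrite rootE !hornerE hr //.
  by rewrite GRing.subrr.
have := max_poly_roots pn0 ar ul.
rewrite size_XnsubC //.
by rewrite ltnS sl leqNgt ltn_pmod.
Qed.
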